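(* Let $(V,d,k,q)$ be an instance of the individually fair $k$-center with outliers problem (IF$k$CO) as defined in the context, let $l\ge 0$ be an integer, and let $(S,O,\sigma)$ be the output of the refined algorithm (Algorithm 3) described in the context, run on this instance with parameter $l$ (with arbitrary tie-breaking). Then $(S,O,\sigma)$ is a feasible solution, i.e. $|S|\le k$ and $|O|\le q$, and $$\alpha(S,O,\sigma)\le 4\cdot \mathrm{OPT},$$ where $\mathrm{OPT}$ is the minimum of $\alpha(S',O',\sigma')$ over all feasible solutions $(S',O',\sigma')$. That is, Algorithm 3 is a $4$-approximation algorithm for the IF$k$CO.
   Context: IF$k$CO instance: a finite set $V$ with $|V|=n$, a metric $d$ on $V$ (nonnegative, symmetric, $d_{ii}=0$, triangle inequality), and integers $k\ge 1$ and $q\ge 0$. For $i\in V$, $NR_q(i)$ is the distance from $i$ to its $\lceil (n-q)/k\rceil$-th nearest neighbor in $V$, where $i$ counts as its own (first) nearest neighbor. A solution is $(S,O,\sigma)$ with $S,O\subseteq V$ and $\sigma:V\setminus O\to S$; feasible if $|S|\le k$, $|O|\le q$. Its outlier-related fairness ratio is $\alpha(S,O,\sigma)=\max_{i\in V\setminus O} d_{\sigma(i)i}/NR_q(i)$. For a parameter $\beta>0$, the procedure $A(\beta)$ is: set $P:=V$, $S:=\emptyset$; while $P\ne\emptyset$ and $|S|<k$: pick $s\in P$ minimizing $NR_q(i)$ over $i\in P$, set $S:=S\cup\{s\}$, $P:=\{i\in P: d_{is}>\beta\, NR_q(i)\}$; finally set $O:=P$ and let $\sigma(i)$ be a nearest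 center in $S$ for each $i\in V\setminus O$. Algorithm 2 is $A(2)$. Algorithm 3 (input: instance and integer $l\ge0$): compute $(S,O,\sigma):=$ output of Algorithm 2; set $t:=0$, $\beta_1:=1$, $\beta_2:=2$, $\beta:=\beta_1$. While $t<l$: run $A(\beta)$ obtaining $(S_\beta,O_\beta,\sigma_\beta)$; if $|O_\beta|>q$, set $\beta_1:=\beta$; if $|O_\beta|\le q$, set $(S,O,\sigma):=(S_\beta,O_\beta,\sigma_\beta)$ and $\beta_2:=\beta$; in either case then set $\beta:=(\beta_1+\beta_2)/2$ and $t:=t+1$. Output $(S,O,\sigma)$. *)

(* Defs.v *)
From mathcomp Require Import all_boot all_order all_algebra.
Set Implicit Arguments. Unset Strict Implicit. Unset Printing Implicit Defensive.
Import Order.TTheory GRing.Theory Num.Theory.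
Local Open Scope ring_scope.

Section IFkCO.
Variables (R : realFieldType) (V : finType) (d : V -> V -> R) (k q : nat).

Definition is_metric : Prop :=
  [/\ forall i j, 0 <= d i j,
      forall i j, d i j = d j i,
      forall i, d i i = 0 &
      forall i j m, d i j <= d i m + d m j].

(* ceil((n - q)/k) with n = |V| (0 if n <= q) *)
Definition nr_rank : nat := ((#|V| - q + k.-1) %/ k)%N.

(* NR_q(i): distance from i to its nr_rank-th nearest neighbour in V,
   i being its own first nearest neighbour (multiset of distances, sorted). *)
Definition NR (i : V) : R :=
  nth 0 (sort <=%R [seq d i j | j <- enum V]) nr_rank.-1.

Record solution := Sol { S : {set V}; O : {set V}; sigma : V -> V }.

Definition feasible (x : solution) : Prop :=
  [/\ #|S x| <= k, #|O x| <= q & forall i, i \notin O x -> sigma x i \in S x]%N.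

(* outlier-related fairness ratio: max over non-outliers of d(sigma i, i)/NR(i)
   (maximum of an empty family taken to be 0) *)
Definition alpha (x : solution) : R :=
  \big[Num.max/0]_(i | i \notin O x) (d (sigma x i) i / NR i).

(* The while loop of A(beta), with arbitrary tie-breaking:
   loopA beta S P S' P' : starting from state (S,P) the loop can end in (S',P'). *)
Inductive loopA (beta : R) : {set V} -> {set V} -> {set V} -> {set V} -> Prop :=
| loopA_stop (Sc P : {set V}) : (P == set0) || (k <= #|Sc|)%N -> loopA beta Sc P Sc P
| loopA_step (Sc P : {set V}) (s : V) (Sf Pf : {set V}) :
    P != set0 -> (#|Sc| < k)%N -> s \in P ->
    (forall i, i \in P -> NR s <= NR i) ->
    loopA beta (s |: Sc) [set i in P | beta * NR i < d i s] Sf Pf ->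
    loopA beta Sc P Sf Pf.

Definition A_out (beta : R) (x : solution) : Prop :=
  loopA beta set0 setT (S x) (O x) /\
  (forall i, i \notin O x ->
     sigma x i \in S x /\ forall c, c \in S x -> d (sigma x i) i <= d c i).

(* binary search loop of Algorithm 3:
   bsearch t b1 b2 b cur out : with t iterations left, state (beta1,beta2,beta)
   and current solution cur, the algorithm can output out. *)
Inductive bsearch : nat -> R -> R -> R -> solution -> solution -> Prop :=
| bs_done b1 b2 b cur : bsearch 0 b1 b2 b cur cur
| bs_infeas t b1 b2 b cur r out :
    A_out b r -> (q < #|O r|)%N ->
    bsearch t b b2 ((b + b2) / 2) cur out ->
    bsearch t.+1 b1 b2 b cur out
| bs_feas t b1 b2 b cur r out :
    A_out b r -> (#|O r| <= q)%N ->
    bsearch t b1 b ((b1 + b) / 2) r out ->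
    bsearch t.+1 b1 b2 b cur out.

Definition alg3_out (l : nat) (x : solution) : Prop :=
  exists x0, A_out 2 x0 /\ bsearch l 1 2 1 x0 x.

End IFkCO.

(* Main.v *)
Require Import Defs.
From mathcomp Require Import all_boot all_order all_algebra.
From mathcomp Require Import zify ring lra.
Set Implicit Arguments. Unset Strict Implicit.
Import Order.TTheory GRing.Theory Num.Theory.
Local Open Scope ring_scope.

Lemma cnt_enum (T : finType) (p : pred T) : count p (enum T) = #|[set x | p x]|.
Proof. rewrite cardsE cardE /enum_mem size_filter count_filter; apply: eq_count => x. by rewrite !inE andbT. Qed.

Lemma cnt_lt (R : realFieldType) (s : seq R) m : sorted <=%R s -> (count (fun y => (y < nth 0 s m)%R) s <= m)%N.
Proof.
move=> ss; set P := (X in count X).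
case: (leqP (size s) m) => hm; first by apply: leq_trans (count_size _ _) hm.
rewrite -(cat_take_drop m s) count_cat.
have -> : count P (drop m s) = 0%N.
  have H : all (predC P) (drop m s).
    apply/(all_nthP 0) => i; rewrite size_drop => hi /=.
    rewrite nth_drop -leNgt.
    apply: (sorted_leq_nth le_trans lexx) => //; [by rewrite inE /= -ltn_subRL | exact: leq_addr].
  move: H; rewrite all_count => /eqP HH.
  move: (count_predC P (drop m s)); rewrite HH => /eqP.
  by rewrite -{2}[size _]add0n eqn_add2r => /eqP.
rewrite addn0; apply: leq_trans (count_size _ _) _; rewrite size_take; case: ifP => //; lia.
Qed.

Lemma cnt_le (R : realFieldType) (s : seq R) m : sorted <=%R s -> (m < size s)%N -> (m.+1 <= count (fun y => (y <= nth 0 s m)%R) s)%N.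
Proof.
move=> ss hm; set P := (X in count X).
rewrite -(cat_take_drop m.+1 s) count_cat.
have H : all P (take m.+1 s).
  apply/(all_nthP 0) => i; rewrite (size_takel hm) => hi.
  rewrite nth_take // /P /=.
  apply: (sorted_leq_nth le_trans lexx) => //; rewrite ?inE /=; exact: leq_trans hi hm.
move: H; rewrite all_count => /eqP ->; rewrite (size_takel hm); exact: leq_addr.
Qed.

Lemma div_ge a k : (1 <= k)%N -> (a <= (a + k.-1) %/ k * k)%N.
Proof. move=> h. rewrite -!subn1. lia. Qed.
Lemma div_lt a k : (1 <= k)%N -> (1 <= a)%N -> (k * ((a + k.-1) %/ k).-1 < a)%N.
Proof. move=> h. rewrite -!subn1. lia. Qed.
Lemma div_le a k : (1 <= k)%N -> ((a + k.-1) %/ k <= a)%N.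
Proof. move=> h. have := leq_trunc_div (a + k.-1) k. rewrite -!subn1. set n := (_ %/ _)%N. nia. Qed.

Lemma sorted_NR (R : realFieldType) (V : finType) (d : V -> V -> R) (i : V) :
  sorted <=%R (sort <=%R [seq d i j | j <- enum V]).
Proof. apply: sort_sorted => x y; exact: le_total. Qed.

Lemma ball_lt (R : realFieldType) (V : finType) (d : V -> V -> R) k q (i : V) :
  (#|[set j | (d i j < NR d k q i)%R]| <= (nr_rank V k q).-1)%N.
Proof.
have := @cnt_lt R _ ((nr_rank V k q).-1) (sorted_NR d i).
rewrite (permP (permEl (perm_sort _ _))) count_map cnt_enum.
by [].
Qed.

Lemma ball_le (R : realFieldType) (V : finType) (d : V -> V -> R) k q (i : V) :
  (1 <= k)%N -> (nr_rank V k q <= #|[set j | (d i j <= NR d k q i)%R]|)%N.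
Proof.
move=> hk.
case E: (nr_rank V k q) => [|m] //.
have hm : (m < size (sort <=%R [seq d i j | j <- enum V]))%N.
  rewrite size_sort size_map -cardT.
  have := div_le (#|V| - q) hk; rewrite /nr_rank in E; rewrite E. lia.
have := @cnt_le R _ m (sorted_NR d i) hm.
rewrite (permP (permEl (perm_sort _ _))) count_map cnt_enum.
by rewrite /NR E.
Qed.

Lemma bigmax_ub (R : realFieldType) (I : eqType) (s : seq I) (P : pred I) (F : I -> R) i :
  i \in s -> P i -> F i <= \big[Num.max/0]_(j <- s | P j) F j.
Proof.
elim: s => // a s IH; rewrite inE big_cons => /orP [/eqP <- | hi] Pi.
  by rewrite Pi le_max lexx.
case: ifP => _; last exact: IH.
by rewrite le_max IH ?orbT.
Qed.

Lemma bigmax_le (R : realFieldType) (I : Type) (s : seq I) (P : pred I) (F : I -> R) c :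
  0 <= c -> (forall i, P i -> F i <= c) -> \big[Num.max/0]_(j <- s | P j) F j <= c.
Proof.
move=> c0 H; apply: (big_ind (fun x => x <= c)) => //.
by move=> x y hx hy; rewrite ge_max hx hy.
Qed.

Lemma loop_end (R : realFieldType) (V : finType) (d : V -> V -> R) k q beta Sc P Sf Pf :
  loopA d k q beta Sc P Sf Pf -> (Pf == set0) || (k <= #|Sf|)%N.
Proof. by elim. Qed.

Lemma loop_card (R : realFieldType) (V : finType) (d : V -> V -> R) k q beta Sc P Sf Pf :
  loopA d k q beta Sc P Sf Pf -> (#|Sc| <= k)%N -> (#|Sf| <= k)%N.
Proof.
elim => // {}Sc {}P s {}Sf {}Pf _ hk _ _ _ IH _; apply: IH.
by rewrite cardsU1; case: (_ \notin _); rewrite /= ?add0n ?add1n //; exact: ltnW.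
Qed.

Lemma loop_cover (R : realFieldType) (V : finType) (d : V -> V -> R) k q beta Sc P Sf Pf :
  loopA d k q beta Sc P Sf Pf ->
  (forall i, i \notin P -> exists2 s, s \in Sc & d i s <= beta * NR d k q i) ->
  forall i, i \notin Pf -> exists2 s, s \in Sf & d i s <= beta * NR d k q i.
Proof.
elim => // {}Sc {}P s {}Sf {}Pf _ _ sP _ _ IH H; apply: IH => i.
rewrite inE negb_and => /orP [iP | ].
  by have [s' s'S hs'] := H i iP; exists s' => //; rewrite inE s'S orbT.
rewrite -leNgt => hi; exists s => //; by rewrite !inE eqxx.
Qed.

Definition U (R : realFieldType) (V : finType) (d : V -> V -> R) k q (Sc : {set V}) :=
  [set j | [exists s in Sc, d s j <= NR d k q s]].

Definition Inv (R : realFieldType) (V : finType) (d : V -> V -> R) k q (Sc P : {set V}) :=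
  [/\ (forall s j, s \in Sc -> j \in P -> NR d k q s <= NR d k q j /\ 2 * NR d k q j < d j s),
      (forall s j, s \in Sc -> d s j <= NR d k q s -> j \notin P) &
      (nr_rank V k q * #|Sc| <= #|U d k q Sc|)%N].

Lemma loop_inv (R : realFieldType) (V : finType) (d : V -> V -> R) k q Sc P Sf Pf :
  is_metric d -> (1 <= k)%N -> (forall i, 0 < NR d k q i) ->
  loopA d k q 2 Sc P Sf Pf -> Inv d k q Sc P -> Inv d k q Sf Pf.
Proof.
move=> [d0 dsym dii dtri] hk NRp.
elim => // {}Sc {}P s {}Sf {}Pf _ _ sP smin _ IH [I1 I2 I3]; apply: IH.
split.
- move=> s' j; rewrite !inE => /orP [/eqP -> | s'S] /andP [jP hj].
    by split => //; apply: smin.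
  exact: I1.
- move=> s' j; rewrite !inE negb_and => /orP [/eqP -> | s'S] hj.
    apply/orP; case: (boolP (j \in P)) => jP; last by left.
    right; rewrite -leNgt dsym.
    apply: (le_trans hj); apply: (le_trans (smin j jP)).
    have := NRp j; lra.
  by rewrite (negbTE (I2 _ _ s'S hj)).
- have disj : [disjoint [set j | d s j <= NR d k q s] & U d k q Sc].
    rewrite -setI_eq0; apply/eqP/setP => j; rewrite !inE.
    apply/negbTE/negP => /andP [hj /existsP [s' /andP [s'S hs']]].
    have [h1 h2] := I1 s' s s'S sP.
    have := dtri s s' j; rewrite (dsym j s') => h3.
    lra.
  have -> : U d k q (s |: Sc) = [set j | d s j <= NR d k q s] :|: U d k q Sc.
    apply/setP => j; rewrite !inE; apply/existsP/orP.
      by move=> [s' /andP []]; rewrite !inE => /orP [/eqP -> | s'S] h; [left | right; apply/existsP; exists s'; rewrite s'S].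
    case=> [h | /existsP [s' /andP [s'S h]]]; first by exists s; rewrite !inE eqxx.
    by exists s'; rewrite !inE s'S orbT.
  rewrite (cardsU [set j | d s j <= NR d k q s] (U d k q Sc)) (disjoint_setI0 disj) cards0 subn0.
  have := ball_le d q s hk.
  have := cardsU1 s Sc.
  set a := #|s |: Sc|; set b := #|Sc|; set c := #|U d k q Sc|; set e := #|[set j | _]|.
  move: I3; rewrite -/b -/c => I3.
  nia.
Qed.

Lemma A2_out (R : realFieldType) (V : finType) (d : V -> V -> R) k q Sf Pf :
  is_metric d -> (1 <= k)%N -> (forall i, 0 < NR d k q i) ->
  loopA d k q 2 set0 setT Sf Pf -> (#|Pf| <= q)%N.
Proof.
move=> hd hk NRp hl.
have I0 : Inv d k q set0 setT.
  split; [by move=> s j; rewrite inE | by move=> s j; rewrite inE | by rewrite cards0 muln0].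
have [_ I2 I3] := loop_inv hd hk NRp hl I0.
have /orP [/eqP -> | hkS] := loop_end hl; first by rewrite cards0.
have sub : Pf \subset ~: U d k q Sf.
  apply/subsetP => j jP; rewrite !inE; apply/negP => /existsP [s /andP [sS hs]].
  by move: (I2 s j sS hs); rewrite jP.
have := subset_leq_card sub; have := cardsC (U d k q Sf).
have := div_ge (#|V| - q) hk.
rewrite /nr_rank in I3 *.
set n := ((#|V| - q + k.-1) %/ k)%N in I3 *.
have : (n * k <= n * #|Sf|)%N by rewrite leq_mul2l hkS orbT.
have := max_card (U d k q Sf).
lia.
Qed.

Lemma alpha_ub (R : realFieldType) (V : finType) (d : V -> V -> R) k q beta x :
  is_metric d -> (forall i, 0 < NR d k q i) -> beta <= 2 ->
  A_out d k q beta x -> alpha d k q x <= 2.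
Proof.
move=> [d0 dsym dii dtri] NRp hb [hl hs].
have cov := loop_cover hl (fun i (h : i \notin setT) => False_ind _ (negP h (in_setT i))).
apply: bigmax_le => // i hi.
have [s sS hds] := cov i hi.
have [_ hmin] := hs i hi.
rewrite ler_pdivrMr //.
have := hmin s sS; rewrite (dsym s i) => h1.
have := NRp i; nra.
Qed.

Lemma alpha_ge0 (R : realFieldType) (V : finType) (d : V -> V -> R) k q y :
  is_metric d -> (forall i, 0 < NR d k q i) -> 0 <= alpha d k q y.
Proof.
move=> [d0 dsym dii dtri] NRp.
apply: (big_ind (fun x => 0 <= x)) => //.
  by move=> a b ha hb; rewrite le_max ha.
by move=> i _; rewrite divr_ge0 // ltW.
Qed.

Lemma alpha_lb (R : realFieldType) (V : finType) (d : V -> V -> R) k q y (i0 : V) :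
  is_metric d -> (1 <= k)%N -> (forall i, 0 < NR d k q i) -> feasible k q y ->
  1/2 <= alpha d k q y.
Proof.
move=> [d0 dsym dii dtri] hk NRp [hSk hOq hsig].
rewrite leNgt; apply/negP => ha.
have hy : forall i, i \notin O y -> 2 * d (sigma y i) i < NR d k q i.
  move=> i hi.
  have := @bigmax_ub R V (index_enum V) (fun i => i \notin O y) (fun i => d (sigma y i) i / NR d k q i) i (mem_index_enum i) hi.
  move=> h; have h2 := le_lt_trans h ha.
  move: h2; rewrite ltr_pdivrMr //; lra.
have hnr : (1 <= (nr_rank V k q).-1)%N.
  have := ball_lt d k q i0.
  have : (0 < #|[set j | (d i0 j < NR d k q i0)%R]|)%N.
    by apply/card_gt0P; exists i0; rewrite inE dii NRp.
  lia.
set nr := nr_rank V k q in hnr.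
pose C c := [set i | (i \in ~: O y) && (sigma y i == c)].
have [c cS hC] : exists2 c, c \in S y & (nr <= #|C c|)%N.
  case: (boolP [exists c in S y, (nr <= #|C c|)%N]) => [/existsP [c /andP [cS hc]] | H].
    by exists c.
  exfalso.
  have hsum : #|~: O y| = (\sum_(c in S y) #|C c|)%N.
    rewrite -sum1_card (partition_big (sigma y) (mem (S y))); last first.
      by move=> i; rewrite inE => hi; apply: hsig.
    apply: eq_bigr => c _; rewrite sum1dep_card; apply: eq_card => i.
    by rewrite !inE.
  have hle : (\sum_(c in S y) #|C c| <= \sum_(c in S y) nr.-1)%N.
    apply: leq_sum => c cS.
    have : ~~ (nr <= #|C c|)%N.
      apply/negP => hc; apply: (negP H); apply/existsP; exists c; by rewrite cS.
    lia.
  move: hle; rewrite sum_nat_const -hsum => hle.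
  have hq1 : (1 <= #|V| - q)%N.
    rewrite /nr /nr_rank in hnr; case E: (#|V| - q)%N hnr => [|a] //.
    rewrite add0n divn_small //; last by rewrite -subn1; lia.
  have := div_lt hk hq1.
  rewrite -/(nr_rank V k q) -/nr.
  have := cardsC (O y).
  have : (#|S y| * nr.-1 <= k * nr.-1)%N by rewrite leq_mul2r hSk orbT.
  lia.
have [i1 i1C] : exists i1, i1 \in C c.
  apply/set0Pn; rewrite -card_gt0; lia.
case: (arg_maxP (fun i => NR d k q i) i1C) => i iC imax.
have hsub : C c \subset [set j | (d i j < NR d k q i)%R].
  apply/subsetP => j jC; rewrite inE.
  have iC2 : i \in C c := iC.
  move: (iC2) (jC); rewrite /C !inE => /andP [iO /eqP ic] /andP [jO /eqP jc].
  have hi := hy i iO; have hj := hy j jO.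
  rewrite ic in hi; rewrite jc in hj.
  have := imax j jC; have := dtri i j c; rewrite (dsym i c).
  move=> h1 h2; have h3 : NR d k q j <= NR d k q i := h2; lra.
have := subset_leq_card hsub.
have := ball_lt d k q i.
rewrite -/nr.
lia.
Qed.

Definition Good (R : realFieldType) (V : finType) (d : V -> V -> R) k q (z : solution V) :=
  exists beta, [/\ beta <= 2, A_out d k q beta z & (#|O z| <= q)%N].

Lemma bs_good (R : realFieldType) (V : finType) (d : V -> V -> R) k q t b1 b2 b cur out :
  bsearch d k q t b1 b2 b cur out -> b1 <= b -> b <= b2 -> b2 <= 2 ->
  Good d k q cur -> Good d k q out.
Proof.
elim => //.
- move=> {}t {}b1 {}b2 {}b {}cur r {}out hA hq _ IH h1 h2 h3 hg.
  apply: IH => //; lra.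
- move=> {}t {}b1 {}b2 {}b {}cur r {}out hA hq _ IH h1 h2 h3 hg.
  apply: IH; try lra.
  exists b; split => //; lra.
Qed.

Unset Implicit Arguments.
Theorem theorem2 (R : realFieldType) (V : finType) (d : V -> V -> R)
  (k q l : nat) (x : solution V) :
  is_metric d -> (1 <= k)%N ->
  (forall i : V, 0 < NR d k q i) ->
  alg3_out d k q l x ->
  feasible k q x /\
  (forall y : solution V, feasible k q y -> alpha d k q x <= 4 * alpha d k q y).
Proof.
move=> hd hk NRp [x0 [hA0 hbs]].
have g0 : Good d k q x0.
  exists 2; split => //; exact: A2_out hd hk NRp hA0.1.
have h12 : (1 : R) <= 2 by lra.
have [beta [hb [hl hs] hq]] := bs_good hbs (lexx _) h12 (lexx _) g0.
split.
  split => //; last by move=> i hi; case: (hs i hi).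
  by apply: loop_card hl _; rewrite cards0.
move=> y hy.
have hx := alpha_ub hd NRp hb (conj hl hs).
case: (pickP (fun _ : V => true)) => [i0 _ | none].
  have := alpha_lb i0 hd hk NRp hy; lra.
have : alpha d k q x <= 0.
  by apply: bigmax_le => // i; move: (none i).
have := alpha_ge0 y hd NRp; lra.
Qed.
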